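(* Let $\rho$ be a density operator on a $d$-dimensional complex Hilbert space $\mathbb{H}$, let $\{\ket{a_i}\}_{i=1}^d$ be an orthonormal basis and $\{\ket{b_k}\}_{k=1}^d$ an orthonormal basis mutually unbiased with respect to $\{\ket{a_i}\}$ (i.e. $|\langle a_i|b_k\rangle|^2 = 1/d$ for all $i,k$). Define the extended KD distribution $Q^\star_{i,j,k} = \langle a_j|b_k\rangle\langle b_k|a_i\rangle\langle a_i|\rho|a_j\rangle$, the moments $r_n = \sum_{i,j,k} (Q^\star_{i,j,k})^n$, and for a positive integer $m$ the $(m+1)\times(m+1)$ Hankel matrix $H_m(\mathbf{r})$ with entries $[H_m(\mathbf{r})]_{ij} = r_{i+j+1}$, $i,j\in\{0,\dots,m\}$. If for some positive integer $m$ the inequality $-\det[H_m(\mathbf{r})] > 0$ holds (in particular $\det[H_m(\mathbf{r})]$ is real), then $\rho$ has nonzero $\ell_1$-norm of coherence in the basis $\{\ket{a_i}\}$, i.e. $\mathcal{C}_{\ell_1}(\rho,\{\ket{a_i}\}) := \sum_{i\neq j} |\langle a_i|\rho|a_j\rangle| > 0$.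
   Context: The $\ell_1$-norm of coherence of $\rho$ with respect to the basis $\{\ket{a_i}\}$ is the sum of the absolute values of the off-diagonal entries of $\rho$ in that basis. *)

(* Defs.v *)
(* Complex scalars: an arbitrary numClosedFieldType C
   (e.g. the complex numbers R[i] over a real closed field, or algC). *)
From HB Require Import structures.
From mathcomp Require Import all_boot all_order all_algebra.
Set Implicit Arguments. Unset Strict Implicit. Unset Printing Implicit Defensive.
Import Order.TTheory GRing.Theory Num.Theory.
Local Open Scope ring_scope.

Definition inner (C : numClosedFieldType) (d : nat) (u v : 'cV[C]_d) : C :=
  \sum_(l < d) (u l 0)^* * v l 0.

Definition density_operator (C : numClosedFieldType) (d : nat) (rho : 'M[C]_d) : Prop :=
  [/\ (forall i j, rho j i = (rho i j)^*),
      (forall v : 'cV[C]_d, 0 <= inner v (rho *m v)) &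
      \tr rho = 1].

Definition orthonormal_basis (C : numClosedFieldType) (d : nat) (a : 'I_d -> 'cV[C]_d) : Prop :=
  forall i j, inner (a i) (a j) = (i == j)%:R.

Definition mutually_unbiased (C : numClosedFieldType) (d : nat) (a b : 'I_d -> 'cV[C]_d) : Prop :=
  forall i k, `|inner (a i) (b k)| ^+ 2 = d%:R^-1.

Definition extKD (C : numClosedFieldType) (d : nat) (rho : 'M[C]_d)
  (a b : 'I_d -> 'cV[C]_d) (i j k : 'I_d) : C :=
  inner (a j) (b k) * inner (b k) (a i) * inner (a i) (rho *m a j).

Definition kd_moment (C : numClosedFieldType) (d : nat) (rho : 'M[C]_d)
  (a b : 'I_d -> 'cV[C]_d) (n : nat) : C :=
  \sum_(i < d) \sum_(j < d) \sum_(k < d) (extKD rho a b i j k) ^+ n.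

Definition hankel (C : numClosedFieldType) (r : nat -> C) (m : nat) : 'M[C]_m.+1 :=
  \matrix_(i < m.+1, j < m.+1) r (i + j + 1)%N.

Definition l1_coherence (C : numClosedFieldType) (d : nat) (rho : 'M[C]_d)
  (a : 'I_d -> 'cV[C]_d) : C :=
  \sum_(i < d) \sum_(j < d | i != j) `|inner (a i) (rho *m a j)|.

(* Main.v *)
Require Import Defs.
From HB Require Import structures.
From mathcomp Require Import all_boot all_order all_algebra.
From mathcomp Require Import ring lra.
Import Order.TTheory GRing.Theory Num.Theory.
Set Implicit Arguments. Unset Strict Implicit. Unset Printing Implicit Defensive.
Local Open Scope ring_scope.

Section PSD.
Variable R : numFieldType.

Definition qf n (M : 'M[R]_n) (x : 'I_n -> R) := \sum_i \sum_j x i * M i j * x j.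
Definition psd n (M : 'M[R]_n) := [/\ forall i j, M i j = M j i,
  forall i j, M i j \is Num.real &
  forall x : 'I_n -> R, (forall i, x i \is Num.real) -> 0 <= qf M x].

Lemma sum_delta_r n (F : 'I_n -> R) p : \sum_j F j * (j == p)%:R = F p.
Proof.
rewrite (bigD1 p) //= eqxx mulr1 big1 ?addr0 // => j /negbTE ->; by rewrite mulr0.
Qed.

Lemma sum_delta2 n (F : 'I_n -> R) p r s t :
  \sum_j F j * (s * (j == p)%:R + t * (j == r)%:R) = s * F p + t * F r.
Proof.
rewrite (eq_bigr (fun j => s * (F j * (j==p)%:R) + t * (F j * (j==r)%:R)));
  last by move=> j _; ring.
by rewrite big_split /= -!mulr_sumr !sum_delta_r.
Qed.

Lemma qf2 n (M : 'M[R]_n) p r s t :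
  qf M (fun i => s * (i==p)%:R + t * (i==r)%:R) =
  s * (s * M p p + t * M p r) + t * (s * M r p + t * M r r).
Proof.
rewrite /qf.
rewrite (eq_bigr (fun i => (s * M i p + t * M i r) * (s * (i==p)%:R + t * (i==r)%:R))).
  by rewrite sum_delta2.
move=> i _; rewrite (sum_delta2 (fun j => (s * (i == p)%:R + t * (i == r)%:R) * M i j)).
ring.
Qed.

Lemma psd_det n (M : 'M[R]_n) : psd M -> 0 <= \det M.
Proof.
elim: n M => [|n IH] M [sym re q]; first by rewrite det_mx00.
set a := M ord0 ord0.
have xreal : forall (p r : 'I_n.+1) (s t : R), s \is Num.real -> t \is Num.real ->
  forall i, (s * (i==p)%:R + t * (i==r)%:R) \is Num.real.
  by move=> p r s t hs ht i; rewrite rpredD // rpredM // realn.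
have a_ge0 : 0 <= a.
  have := q _ (xreal ord0 ord0 1 0 (real1 _) (real0 _)).
  by rewrite qf2 /a; congr (_ <= _); ring.
have [a0|anz] := eqVneq a 0.
  have row0 : forall j, M ord0 j = 0.
    move=> j; have [->//|jnz] := eqVneq j ord0.
    apply/eqP; apply/negP => /negP h.
    pose t0 := - (M j j + 1) / (2 * M ord0 j).
    have ht0 : t0 \is Num.real.
      by rewrite /t0 rpredM ?rpredN ?rpredV ?rpredM ?rpredD ?realn ?re ?rpred1.

    have := q _ (xreal ord0 j t0 1 ht0 (real1 _)).
    rewrite qf2 -/a a0 (sym j ord0) /t0.
    have h2 : 2 * M ord0 j != 0 by rewrite mulf_neq0 // pnatr_eq0.
    have -> : - (M j j + 1) / (2 * M ord0 j) * (- (M j j + 1) / (2 * M ord0 j) * 0 + 1 * M ord0 j) +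
      1 * (- (M j j + 1) / (2 * M ord0 j) * M ord0 j + 1 * M j j) = -1.
      by field.
    by rewrite oppr_ge0 ler10.
  rewrite (expand_det_row _ ord0) big1 // => j _; by rewrite row0 mul0r.
have a_gt0 : 0 < a by rewrite lt_def anz.
pose S : 'M[R]_n := \matrix_(i, j) (M (lift ord0 i) (lift ord0 j)
   - M (lift ord0 i) ord0 * M ord0 (lift ord0 j) / a).
have detE : \det M = a * \det S.
  pose f (i : 'I_n.+1) := if i == ord0 then 0 else M i ord0 / a.
  pose L : 'M[R]_n.+1 := \matrix_(i, j) ((i == j)%:R - (j == ord0)%:R * f i).
  have detL : \det L = 1.
    rewrite det_trig.
      rewrite big1 // => i _; rewrite mxE eqxx /f.
      by case: (i =P ord0) => _; rewrite ?mulr0 ?mul0r subr0.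
    apply/is_trig_mxP => i j ltij; rewrite mxE.
    have /negbTE -> : i != j by rewrite neq_ltn ltij.
    have /negbTE -> : j != ord0 by rewrite -val_eqE /= -lt0n (leq_ltn_trans _ ltij).
    by rewrite mul0r subr0.
  have LM : forall i k, (L *m M) i k = M i k - f i * M ord0 k.
    move=> i k; rewrite mxE.
    rewrite (eq_bigr (fun j => M j k * (j == i)%:R - (f i * M j k) * (j == ord0)%:R)).
      by rewrite sumrB !sum_delta_r; ring.
    by move=> j _; rewrite mxE eq_sym; ring.
  have := det_mulmx L M; rewrite detL mul1r => <-.
  rewrite (expand_det_col _ ord0) big_ord_recl big1.
    rewrite addr0 LM /f eqxx mul0r subr0 /cofactor /= expr0 mul1r; congr (_ * \det _).
    apply/matrixP => i j; rewrite [X in X = _]mxE [X in X = _]mxE LM mxE /f.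
    have /negbTE -> : lift ord0 i != ord0 by apply/eqP => /(congr1 val).
    by rewrite mulrAC.
  move=> i _; rewrite LM /f.
  have /negbTE -> : lift ord0 i != ord0 by apply/eqP => /(congr1 val).
  by rewrite -/a divfK // subrr mul0r.
rewrite detE mulr_ge0 // IH //; split.
- move=> i j; rewrite !mxE (sym (lift ord0 i) (lift ord0 j)) (sym (lift ord0 i) ord0) (sym ord0 (lift ord0 j)); congr (_ - _ / a); exact: mulrC.
- by move=> i j; rewrite mxE rpredB ?rpredM ?rpredV ?re.
move=> y yr.
pose w := \sum_j M ord0 (lift ord0 j) * y j.
pose z (i : 'I_n.+1) := if unlift ord0 i is Some k then y k else - w / a.
have zr : forall i, z i \is Num.real.
  move=> i; rewrite /z; case: (unlift ord0 i) => [k|]; first exact: yr.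
  by rewrite rpredM ?rpredN ?rpredV ?re ?rpred_sum // => j _; rewrite rpredM ?re.
have := q z zr; congr (_ <= _).
have zl : forall k, z (lift ord0 k) = y k by move=> k; rewrite /z liftK.
have z0 : z ord0 = - w / a by rewrite /z unlift_none.
rewrite /qf big_ord_recl big_ord_recl z0.
have T3 : \sum_(i<n) \sum_j z (lift ord0 i) * M (lift ord0 i) j * z j =
   \sum_i y i * M (lift ord0 i) ord0 * (-w/a) +
   \sum_i \sum_j y i * M (lift ord0 i) (lift ord0 j) * y j.
  rewrite -big_split; apply eq_bigr => i _; rewrite big_ord_recl z0 zl; congr (_ + _).
  by apply eq_bigr => j _; rewrite !zl.
have T2 : \sum_(i<n.+1.-1) -w/a * M ord0 (lift ord0 i) * z (lift ord0 i) = -w/a*w.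
  by rewrite /w mulr_sumr; apply eq_bigr => i _; rewrite zl; ring.
have T3' : \sum_(i<n) y i * M (lift ord0 i) ord0 * (-w/a) = -w/a*w.
  by rewrite /w mulr_sumr; apply eq_bigr => i _; rewrite sym; ring.
have ES : \sum_i \sum_j y i * S i j * y j =
   \sum_i \sum_j y i * M (lift ord0 i) (lift ord0 j) * y j - w * w / a.
  rewrite /w mulr_suml mulr_suml -sumrB; apply eq_bigr => i _.
  rewrite mulr_sumr mulr_suml -sumrB; apply eq_bigr => j _.
  rewrite mxE (sym (lift ord0 i) ord0); field; done.
rewrite T3 T2 T3' ES -/a; field; done.
Qed.
End PSD.
Lemma hankel_psd (R : numFieldType) (I : finType) (p : I -> R) (m : nat) :
  (forall l, 0 <= p l) ->
  psd (\matrix_(i < m.+1, j < m.+1) \sum_l p l ^+ (i + j + 1)).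
Proof.
move=> p0; split.
- by move=> i j; rewrite !mxE (addnC i).
- move=> i j; rewrite mxE; apply: ger0_real; apply: sumr_ge0 => l _; exact: exprn_ge0.
move=> x xr; rewrite /qf.
have E : forall s t, x s * (\matrix_(i < m.+1, j < m.+1) \sum_l p l ^+ (i + j + 1)) s t * x t
   = \sum_l p l * (x s * p l ^+ s) * (x t * p l ^+ t).
  move=> s t; rewrite mxE mulr_sumr mulr_suml; apply eq_bigr => l _.
  rewrite addn1 exprS exprD; ring.
under eq_bigr => s _ do under eq_bigr => t _ do rewrite E.
under eq_bigr => s _ do rewrite exchange_big /=.
rewrite exchange_big /=; apply: sumr_ge0 => l _.
set w := \sum_(s < m.+1) x s * p l ^+ s.
have -> : \sum_(s < m.+1) \sum_(t < m.+1) p l * (x s * p l ^+ s) * (x t * p l ^+ t) = p l * w * w.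
  rewrite /w [p l * _]mulr_sumr mulr_suml; apply eq_bigr => s _; rewrite mulr_sumr; apply eq_bigr => t _; ring.
have wr : w \is Num.real.
  by rewrite rpred_sum // => s _; rewrite rpredM ?rpredX ?xr ?ger0_real.
by rewrite -mulrA -expr2 -real_normK // mulr_ge0 // exprn_ge0.
Qed.

Lemma innerC (C : numClosedFieldType) d (u v : 'cV[C]_d) : inner v u = (inner u v)^*.
Proof.
rewrite /inner rmorph_sum; apply eq_bigr => l _; by rewrite rmorphM /= conjCK mulrC.
Qed.

Theorem theorem3 (C : numClosedFieldType) (d : nat) (rho : 'M[C]_d)
  (a b : 'I_d -> 'cV[C]_d) (m : nat) :
  density_operator rho ->
  orthonormal_basis a ->
  orthonormal_basis b ->
  mutually_unbiased a b ->
  (0 < m)%N ->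
  0 < - \det (hankel (kd_moment rho a b) m) ->
  0 < l1_coherence rho a.
Proof.
move=> [herm psdr tr] ona onb mub m0 hdet.
have ge0 : 0 <= l1_coherence rho a.
  by apply: sumr_ge0 => i _; apply: sumr_ge0 => j _.
move: ge0; rewrite le0r => /orP [/eqP l0|//]; exfalso.
have off : forall i j, i != j -> inner (a i) (rho *m a j) = 0.
  move=> i j ij.
  have h1 : \sum_(j < d | i != j) `|inner (a i) (rho *m a j)| = 0.
    by apply: (psumr_eq0P _ l0) => // k _; apply: sumr_ge0.
  apply: normr0_eq0; apply: (psumr_eq0P _ h1) => //.
pose p i := inner (a i) (rho *m a i) / d%:R.
have p0 : forall i, 0 <= p i by move=> i; rewrite divr_ge0 ?ler0n.
have Qd : forall i k, extKD rho a b i i k = p i.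
  move=> i k; rewrite /extKD (innerC (a i) (b k)) -normCK mub /p mulrC.
  done.
have Qo : forall i j k, i != j -> extKD rho a b i j k = 0.
  by move=> i j k ij; rewrite /extKD off // mulr0.
have mom : forall n, kd_moment rho a b n.+1 = \sum_(l : 'I_d * 'I_d) p l.1 ^+ n.+1.
  move=> n; rewrite /kd_moment -(pair_bigA _ (fun i k => p i ^+ n.+1)).
  apply eq_bigr => i _; rewrite (bigD1 i) //= [X in _ + X]big1 ?addr0.
    by apply eq_bigr => k _; rewrite Qd.
  by move=> j ji; apply: big1 => k _; rewrite Qo ?expr0n // eq_sym.
have HE : hankel (kd_moment rho a b) m =
    \matrix_(i < m.+1, j < m.+1) \sum_(l : 'I_d * 'I_d) p l.1 ^+ (i + j + 1).
  by apply/matrixP => s t; rewrite !mxE addn1 mom.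
have dge0 := psd_det (hankel_psd m (fun l : 'I_d * 'I_d => p0 l.1)).
rewrite HE oppr_gt0 in hdet.
by have := le_lt_trans dge0 hdet; rewrite ltxx.
Qed.
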